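(* Let $x\ge2$, let $k=k(x)\ge2$, and let $m$ be a uniformly random integer in $[1,x]$. Then \[ \mathbb{P}\big(\exists\text{ prime }p>k:\ v_p(m)=1\big)=1-O\Big(\frac{\log k}{\log x}+\frac1k\Big), \] with an absolute implied constant.
   Context: $v_p$ denotes the $p$-adic valuation on the integers. *)

(* Defs.v *)
From HB Require Import structures.
From mathcomp Require Import all_boot all_order all_algebra.
From mathcomp Require Import all_classical all_reals all_analysis.
Set Implicit Arguments. Unset Strict Implicit. Unset Printing Implicit Defensive.
Import Order.TTheory GRing.Theory Num.Theory.
Local Open Scope ring_scope.

(* m has a prime factor p > k appearing to exactly the first power (v_p(m) = 1).
   Any such p divides m, so p <= m and it suffices to search p in [0, m]. *)
Definition has_large_simple_prime {R : realType} (k : R) (m : nat) : bool :=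
  has (fun p : nat => [&& prime p, k < p%:R & logn p m == 1%N]) (iota 0 m.+1).

Definition prob_large_simple_prime {R : realType} (x k : R) : R :=
  (count (has_large_simple_prime k) (iota 1 (Num.truncn x)))%:R / (Num.truncn x)%:R.

(* Main.v *)
Require Import Defs.
From HB Require Import structures.
From mathcomp Require Import all_boot all_order all_algebra.
From mathcomp Require Import all_classical all_reals all_analysis.
From mathcomp Require Import zify ring lra.
Import Order.TTheory GRing.Theory Num.Theory.
Set Implicit Arguments. Unset Strict Implicit. Unset Printing Implicit Defensive.

Definition smooth (K : nat) (m : nat) : bool := [pred p | p <= K].-nat m.

Lemma prod_le_const (r : seq nat) (P : pred nat) (F : nat -> nat) c :
  {in r, forall i, F i <= c} -> \prod_(i <- r | P i) F i <= c ^ count P r.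
Proof.
elim: r => [|a r IH] Hr; first by rewrite big_nil.
rewrite big_cons /=.
have Ha : F a <= c by apply: Hr; rewrite inE eqxx.
have IH' : \prod_(i <- r | P i) F i <= c ^ count P r.
  by apply: IH => i Hi; apply: Hr; rewrite inE Hi orbT.
case: (P a) => /=; last by rewrite add0n.
by rewrite add1n expnS leq_mul.
Qed.

Lemma legendre p n : prime p -> (p - 1) * logn p n`! <= n.
Proof.
move=> pp; rewrite logn_fact //.
have p0 : 0 < p by apply: prime_gt0.
suff H : forall m, (p - 1) * \sum_(1 <= k < m.+1) n %/ p ^ k + n %/ p ^ m <= n.
  by apply: leq_trans (H n); apply: leq_addr.
elim=> [|m IH]; first by rewrite big_geq // muln0 expn0 divn1.
rewrite big_nat_recr //=.
have h : p * (n %/ p ^ m.+1) <= n %/ p ^ m.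
  by rewrite expnSr divnMA mulnC leq_divM.
set S := \sum_(1 <= k < m.+1) _ in IH *.
set t := n %/ p ^ m.+1 in h *.
nia.
Qed.

Lemma key_exp p K n : prime p -> p <= K ->
  logn p n`! * K <= logn p K`! * (4 * n).
Proof.
move=> pp pK.
have h1 := legendre n pp.
have p2 : 2 <= p by apply: prime_gt1.
have p0 : 0 < p by apply: prime_gt0.
have h2 := ltn_ceil K p0.
have h3 : 0 < K %/ p by rewrite divn_gt0.
have h5 : K %/ p <= logn p K`!.
  rewrite logn_fact // big_ltn ?ltnS ?(leq_trans (prime_gt0 pp) pK) //.
  by rewrite expn1 leq_addr.
set a := logn p n`! in h1 *. set b := logn p K`! in h5 *.
set q := K %/ p in h2 h3 h5 *.
have e1 : K <= 2 * q * p by nia.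
have e2 : p * a <= 2 * n by nia.
have e3 : a * K <= 2 * q * (p * a) by nia.
nia.
Qed.

Lemma fact_iota n : n`! = \prod_(i <- iota 1 n) i.
Proof. by rewrite fact_prod /index_iota subSS subn0. Qed.

Lemma prodX (r : seq nat) (P : pred nat) (F : nat -> nat) e :
  (\prod_(i <- r | P i) F i) ^ e = \prod_(i <- r | P i) F i ^ e.
Proof.
elim: r => [|a r IH]; first by rewrite !big_nil exp1n.
by rewrite !big_cons; case: (P a); rewrite ?expnMn IH.
Qed.

Lemma fact_le K : K`! <= K ^ K.
Proof.
rewrite fact_iota.
have := @prod_le_const (iota 1 K) predT id K.
rewrite count_predT size_iota; apply=> i; rewrite mem_iota; lia.
Qed.

Lemma leq_expl2r a b e : a <= b -> a ^ e <= b ^ e.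
Proof. by move=> h; elim: e => // e IH; rewrite !expnS leq_mul. Qed.

Lemma partF_le n K : 1 <= K -> n`!`_[pred p | p <= K] <= K ^ (4 * n).
Proof.
move=> K1; set pi := [pred p | p <= K].
rewrite -(@leq_exp2r _ _ K); last lia.
set N := n`! + K`!.
have G : n`!`_pi ^ K <= (K`!`_pi) ^ (4 * n).
  rewrite (@widen_partn N _ n`!); last by rewrite leq_addr.
  rewrite (@widen_partn N _ K`!); last by rewrite leq_addl.
  rewrite !prodX.
  apply: leq_prod => p; rewrite inE => pK.
  rewrite -!expnM; case pp: (prime p).
    by apply: leq_pexp2l; [apply: prime_gt0 | apply: key_exp].
  have -> : logn p n`! = 0 by rewrite lognE pp.
  have -> : logn p K`! = 0 by rewrite lognE pp.
  by rewrite !mul0n.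
apply: (leq_trans G).
have -> : (K ^ (4 * n)) ^ K = (K ^ K) ^ (4 * n) by rewrite -!expnM mulnC.
apply: leq_expl2r; apply: leq_trans (fact_le K).
apply: dvdn_leq; [apply: fact_gt0 | apply: dvdn_part].
Qed.
Lemma smooth_bound n K : 1 <= K ->
  n`! * n ^ count (smooth K) (iota 1 n) <= K ^ (4 * n) * n ^ n.
Proof.
move=> K1.
have E : n`! = (\prod_(i <- iota 1 n | smooth K i) i) *
               (\prod_(i <- iota 1 n | ~~ smooth K i) i).
  by rewrite fact_iota (bigID (smooth K)).
set P := \prod_(i <- iota 1 n | smooth K i) i in E.
set Q := \prod_(i <- iota 1 n | ~~ smooth K i) i in E.
have HQ : Q <= n ^ count (predC (smooth K)) (iota 1 n).
  apply: prod_le_const => i; rewrite mem_iota; lia.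
have Hc := count_predC (smooth K) (iota 1 n); rewrite size_iota in Hc.
have HP : P <= K ^ (4 * n).
  apply: leq_trans (partF_le n K1).
  have Pnat : [pred p | p <= K].-nat P.
    rewrite /P; elim/big_ind: _ => //.
    by move=> a b Ha Hb; rewrite pnatM Ha Hb.
  rewrite -(part_pnat_id Pnat); apply: dvdn_leq; first exact: part_gt0.
  by apply: partn_dvd; [apply: fact_gt0 | rewrite E dvdn_mulr].
rewrite E -mulnA.
have -> : n ^ n = n ^ count (predC (smooth K)) (iota 1 n) * n ^ count (smooth K) (iota 1 n).
  by rewrite -expnD addnC Hc.
by rewrite !mulnA leq_mul // leq_mul.
Qed.
Lemma count_dvd d n : 0 < d -> count (fun m => d %| m) (iota 1 n) = n %/ d.
Proof.
move=> d0; elim: n => [|n IH]; first by rewrite div0n.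
rewrite -[n.+1]addn1 iotaD count_cat IH /= addn0 add1n addn1 divnS // addnC.
by [].
Qed.

Lemma count_union (Q : nat -> nat -> bool) (js s : seq nat) :
  count (fun m => has (fun j => Q j m) js) s <= \sum_(j <- js) count (Q j) s.
Proof.
elim: js => [|j js IH]; first by rewrite big_nil count_pred0.
rewrite big_cons /=.
apply: leq_trans (leq_add (leqnn _) IH).
rewrite -count_predUI; apply: leq_trans (leq_addr _ _).
by apply: sub_count => m.
Qed.

Lemma count_le_in (a b : pred nat) s :
  {in s, forall x, a x -> b x} -> count a s <= count b s.
Proof.
elim: s => [|x s IH] H //=.
apply: leq_add; last by apply: IH => y ys; apply: H; rewrite inE ys orbT.
by case ax: (a x) => //; rewrite H // inE eqxx.
Qed.

Local Open Scope ring_scope.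

Section RealPart.
Variable R : realType.

Lemma step_e (n : nat) : (n.+1%:R : R) ^+ n <= expR 1 * n%:R ^+ n.
Proof.
case: n => [|n]; first by rewrite !expr0 mulr1 -expR0 ler_expR.
set m := n.+1.
have m0 : (0 : R) < m%:R by rewrite ltr0n.
have -> : (m.+1%:R : R) = m%:R * (1 + m%:R^-1).
  by rewrite mulrDr mulr1 mulfV ?gt_eqF // -natr1.
rewrite exprMn mulrC ler_wpM2r ?exprn_ge0 ?ler0n //.
apply: (le_trans (y := expR (m%:R^-1) ^+ m)).
  apply: lerXn2r; rewrite ?nnegrE ?expR_ge0 //.
  exact: expR_ge1Dx.
by rewrite -expRM_natl mulfV ?gt_eqF.
Qed.

Lemma nn_le (n : nat) : (n%:R : R) ^+ n <= expR 1 ^+ n * n`!%:R.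
Proof.
elim: n => [|n IH]; first by rewrite !expr0 mul1r.
rewrite factS natrM !exprS.
have h1 := step_e n.
have a0 : (0:R) <= n.+1%:R by rewrite ler0n.
have E0 : (0:R) <= expR 1 by rewrite expR_ge0.
have En0 : (0:R) <= expR 1 ^+ n by rewrite exprn_ge0.
have h3 : (n.+1%:R : R) * n.+1%:R ^+ n <= n.+1%:R * (expR 1 * n%:R ^+ n).
  by rewrite ler_wpM2l.
have h4 : (n.+1%:R : R) * (expR 1 * n%:R ^+ n) <= n.+1%:R * (expR 1 * (expR 1 ^+ n * n`!%:R)).
  by rewrite ler_wpM2l // ler_wpM2l.
apply: (le_trans h3); apply: (le_trans h4).
by rewrite !mulrA le_eqVlt; apply/orP; left; apply/eqP; ring.
Qed.

Lemma sum_inv_sq (K L : nat) : (0 < K)%N ->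
  \sum_(j <- iota K.+1 L) ((j * j)%:R : R)^-1 <= K%:R^-1 - (K + L)%:R^-1.
Proof.
move=> K0; elim: L => [|L IH]; first by rewrite big_nil addn0 subrr.
rewrite -[L.+1]addn1 iotaD big_cat big_seq1 /=.
have a0 : (0 : R) < (K + L)%:R by rewrite ltr0n addn_gt0 K0.
set a := ((K + L)%:R : R) in a0 IH.
have E1 : ((K.+1 + L) * (K.+1 + L))%:R = (a + 1) * (a + 1) :> R.
  by rewrite natrM /a addSn -addn1 natrD.
have E2 : ((K + (L + 1))%:R : R) = a + 1 by rewrite addnA natrD.
rewrite E1 E2.
have h : ((a + 1) * (a + 1))^-1 <= a^-1 - (a + 1)^-1.
  have -> : a^-1 - (a + 1)^-1 = (a * (a + 1))^-1.
    by field; rewrite ?gt_eqF //; lra.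
  rewrite lef_pV2 ?posrE ?mulr_gt0 //; try lra.
lra.
Qed.

Lemma ln2_ge : 1 / 2 <= ln (2 : R).
Proof.
have h := @le_ln1Dx R (- (1/2)).
have e : 1 + - (1 / 2) = (2 : R)^-1 by field.
have hh : (- 1 : R) < - (1 / 2) by lra.
have := h hh; rewrite e lnV ?posrE //; lra.
Qed.

Lemma s_ln (n K s : nat) : (2 <= n)%N -> (2 <= K)%N ->
  (n`! * n ^ s <= K ^ (4 * n) * n ^ n)%N ->
  s%:R * ln (n%:R : R) <= 6 * n%:R * ln K%:R.
Proof.
move=> n2 K2 H.
have n0 : (0 : R) < n%:R by rewrite ltr0n ltnW.
have K0 : (0 : R) < K%:R by rewrite ltr0n ltnW.
have f0 : (0 : R) < n`!%:R by rewrite ltr0n fact_gt0.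
have HR : n`!%:R * (n%:R : R) ^+ s <= K%:R ^+ (4 * n) * n%:R ^+ n.
  by rewrite -!natrX -!natrM ler_nat.
have H2 := nn_le n.
have H3 : (n%:R : R) ^+ s <= K%:R ^+ (4 * n) * expR 1 ^+ n.
  have : n`!%:R * (n%:R : R) ^+ s <= n`!%:R * (K%:R ^+ (4 * n) * expR 1 ^+ n).
    apply: (le_trans HR).
    have h := ler_wpM2l (exprn_ge0 (4 * n) (ltW K0)) H2.
    apply: (le_trans h).
    by rewrite le_eqVlt; apply/orP; left; apply/eqP; ring.
  by rewrite ler_pM2l.
have p1 : 0 < (K%:R : R) ^+ (4 * n) by apply: exprn_gt0.
have p2 : 0 < (expR 1 : R) ^+ n by apply: exprn_gt0; apply: expR_gt0.
have H4 := H3; rewrite -ler_ln ?posrE ?exprn_gt0 ?mulr_gt0 ?expR_gt0 // in H4.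
rewrite lnM ?posrE // !lnXn ?expR_gt0 // expRK in H4.
have l2 := ln2_ge.
have lK : ln (2 : R) <= ln K%:R.
  by rewrite ler_ln ?posrE // ?ler_nat //; lra.
have H5 : ln (n%:R : R) * s%:R <= ln K%:R * (4 * n)%:R + n%:R.
  by rewrite !mulr_natr.
clear H4; rename H5 into H4.
have : (n%:R : R) <= 2 * n%:R * ln K%:R.
  have : 0 <= n%:R * (2 * ln (K%:R : R) - 1) by apply: mulr_ge0; lra.
  lra.
rewrite natrM in H4.
move=> h5; rewrite mulrC.
nra.
Qed.
End RealPart.

Lemma divn_le_R (R : realType) (n d : nat) : ((n %/ d)%:R : R) <= n%:R * (d%:R)^-1.
Proof.
case: d => [|d]; first by rewrite divn0 !mulr0n invr0 mulr0.
rewrite -[_%:R]mulr1 -[X in _ * X <= _](@mulfV R d.+1%:R) ?pnatr_eq0 //.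
rewrite mulrA ler_wpM2r ?invr_ge0 ?ler0n // -natrM ler_nat; exact: leq_divM.
Qed.

Lemma hL1 (K p m n : nat) : (K < p)%N -> (p <= m)%N -> (m < 1 + n)%N -> p \in iota K.+1 n.
Proof. by move=> *; rewrite mem_iota; lia. Qed.
Lemma hL1' (p m : nat) : (p <= m)%N -> p \in iota 0 m.+1.
Proof. by move=> *; rewrite mem_iota; lia. Qed.
Lemma hL2 (l : nat) : (0 < l)%N -> l != 1%N -> (2 <= l)%N.
Proof. by move=> *; lia. Qed.
Lemma hL3 (K j n : nat) : j \in iota K.+1 n -> (0 < j * j)%N.
Proof. by rewrite mem_iota => *; rewrite muln_gt0; apply/andP; split; lia. Qed.
Lemma hL4 (n : nat) : (2 <= n)%N -> (n.+1 <= n * n)%N.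
Proof. by move=> *; nia. Qed.

Theorem proposition4p2 (R : realType) :
  exists C : R, 0 < C /\
    forall x k : R, 2 <= x -> 2 <= k ->
      `|1 - prob_large_simple_prime x k| <= C * (ln k / ln x + k^-1).
Proof.
exists 12; split; first lra.
move=> x k hx hk.
have x0 : 0 <= x by lra.
have k0 : 0 <= k by lra.
set n := Num.truncn x; set K := Num.truncn k.
have n2 : (2 <= n)%N by rewrite /n truncn_ge_nat.
have K2 : (2 <= K)%N by rewrite /K truncn_ge_nat.
have nx : n%:R <= x by rewrite /n truncn_le.
have xn : x < n.+1%:R by exact: truncnS_gt.
have Kk : K%:R <= k by rewrite /K truncn_le.
have kK : k < K.+1%:R by exact: truncnS_gt.
set good := has_large_simple_prime k.
set s := count (smooth K) (iota 1 n).
set cb := count (predC good) (iota 1 n).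
have Hc := count_predC good (iota 1 n); rewrite size_iota in Hc.
have n0 : (0 : R) < n%:R by rewrite ltr0n ltnW.
have E : 1 - prob_large_simple_prime x k = cb%:R / n%:R.
  rewrite /prob_large_simple_prime -/n -/good.
  have -> : (cb%:R : R) = n%:R - (count good (iota 1 n))%:R.
    by rewrite -{1}Hc natrD; ring.
  by rewrite mulrBl divff ?gt_eqF.
rewrite E ger0_norm ?divr_ge0 ?ler0n //.
have Hin : {in iota 1 n, forall m, predC good m ->
      smooth K m || has (fun j => (j * j %| m)%N) (iota K.+1 n)}.
  move=> m; rewrite mem_iota => /andP [m1 mn] /= ngood.
  case sm: (smooth K m) => //=.
  move: sm; rewrite /smooth /pnat m1 /= => /allPn [p pm pK].
  rewrite inE /= -ltnNge in pK.
  move: pm; rewrite mem_primes => /and3P [pp _ pdm].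
  have pm : (p <= m)%N by apply: dvdn_leq.
  have lg1 : (0 < logn p m)%N by rewrite logn_gt0 mem_primes pp m1.
  have lg2 : logn p m != 1%N.
    apply/negP => l1; apply: (negP ngood); apply/hasP; exists p.
      exact: hL1'.
    rewrite pp l1 andbT /=.
    apply: (lt_le_trans kK); rewrite ler_nat; exact: pK.
  apply/hasP; exists p; first exact: (hL1 pK pm mn).
  by rewrite mulnn pfactor_dvdn // hL2.
have Hcb : (cb <= s + \sum_(j <- iota K.+1 n) n %/ (j * j))%N.
  apply: leq_trans (count_le_in Hin) _.
  set sq := (fun m => has (fun j => (j * j %| m)%N) (iota K.+1 n)).
  have U := count_predUI (smooth K) sq (iota 1 n).
  apply: (@leq_trans (count (smooth K) (iota 1 n) + count sq (iota 1 n))).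
    by rewrite -U; apply: leq_addr.
  rewrite leq_add2l; apply: leq_trans (count_union _ _ _) _.
  rewrite big_seq_cond [X in (_ <= X)%N]big_seq_cond.
  apply: leq_sum => j; rewrite andbT => jm.
  by rewrite count_dvd //; apply: (hL3 jm).
have HcbR : (cb%:R : R) <= s%:R + n%:R * (K%:R)^-1.
  apply: (le_trans (y := s%:R + \sum_(j <- iota K.+1 n) ((n %/ (j * j))%:R : R))).
    by rewrite -natr_sum -natrD ler_nat.
  rewrite lerD2l.
  apply: (le_trans (y := \sum_(j <- iota K.+1 n) (n%:R * ((j * j)%:R)^-1 : R))).
    by apply: ler_sum => j _; apply: divn_le_R.
  rewrite -mulr_sumr ler_wpM2l ?ler0n //.
  apply: le_trans (@sum_inv_sq R K n _) _; first exact: ltnW.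
  rewrite lerBlDr lerDl invr_ge0 ler0n //.
have Hs := s_ln R n2 K2 (smooth_bound n (ltnW K2)).
rewrite -/s in Hs.
have K0 : (0 : R) < K%:R by rewrite ltr0n ltnW.
have B0 : 0 < ln (n%:R : R) by apply: ln_gt0; rewrite ltr1n.
have AY : ln (K%:R : R) <= ln k by rewrite ler_ln ?posrE //; lra.
have A0 : 0 <= ln (K%:R : R) by apply: ln_ge0; rewrite ler1n ltnW.
have X0 : 0 < ln x by apply: ln_gt0; lra.
have XB : ln x <= 2 * ln (n%:R : R).
  have : x <= n%:R * n%:R.
    apply: (le_trans (ltW xn)); rewrite -natrM ler_nat; exact: hL4.
  rewrite -ler_ln ?posrE ?mulr_gt0 //; last lra.
  by rewrite lnM ?posrE //; lra.
have hs1 : s%:R * ln x <= 12 * n%:R * ln k.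
  have : s%:R * ln x <= 2 * (s%:R * ln (n%:R : R)).
    have : (0:R) <= s%:R by rewrite ler0n.
    nra.
  nra.
have hs2 : (s%:R : R) / n%:R <= 12 * (ln k / ln x).
  rewrite ler_pdivrMr //.
  have -> : 12 * (ln k / ln x) * n%:R = (12 * n%:R * ln k) / ln x.
    by field; rewrite gt_eqF.
  by rewrite ler_pdivlMr.
have hK : (K%:R : R)^-1 <= 12 * k^-1.
  have : k <= 2 * K%:R by move: kK; rewrite -natr1; lra.
  move=> h2.
  have h3 : (2 * K%:R)^-1 <= k^-1 by rewrite lef_pV2 ?posrE; lra.
  have h4 : (K%:R : R)^-1 = 2 * (2 * K%:R)^-1.
    have t2 : (2 : R) != 0 by rewrite pnatr_eq0.
    by rewrite invfM mulrA divff ?mul1r.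
  have : 0 <= k^-1 by rewrite invr_ge0.
  lra.
have : (cb%:R : R) / n%:R <= s%:R / n%:R + (K%:R)^-1.
  rewrite ler_pdivrMr // mulrDl -mulrA mulVf ?gt_eqF // mulr1.
  by apply: (le_trans HcbR); rewrite mulrC.
lra.
Qed.
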